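(* If $\mathbf{X} \in \mathbb{R}^{m \times n}$ admits a factorization of the form \begin{equation} \mathbf{X} = \begin{bmatrix} \mathbf{u} & 0 \\ 0 & -\mathbf{u} \end{bmatrix} \begin{bmatrix} 0 & \mathbf{v}^{T} \\ \mathbf{v}^{T} & 0 \end{bmatrix} \end{equation} for some $\mathbf{v} \in \mathbb{R}^{n-1}$ and $\mathbf{u} \in \mathbb{R}^{m-1}$, then $\mathbf{X} \in \mathcal{N}(\mathscr{S}, 2)$.
   Context: Let $\mathscr{S} \colon \mathbb{R}^{m \times n} \to \mathbb{R}^{m+n-1}$ be the lifted linear convolution map, i.e. the linear operator with $(\mathscr{S}(\mathbf{W}))_k = \langle \mathbf{W}, \mathbf{S}_k \rangle$ for $1 \le k \le m+n-1$, where $(\mathbf{S}_k)_{ij} = 1$ if $i + j = k+1$ and $0$ otherwise ($1 \le i \le m$, $1 \le j \le n$); thus $\mathscr{S}$ sums the entries of its argument along anti-diagonals and satisfies $\mathscr{S}(\mathbf{x}\mathbf{y}^{T}) = \mathbf{x} \star \mathbf{y}$ (linear convolution). For a linear operator $\mathscr{S}$, $\mathcal{N}(\mathscr{S}, k) = \{\mathbf{X} \in \mathbb{R}^{m \times n} : \mathrm{rank}(\mathbf{X}) \le k,\ \mathscr{S}(\mathbf{X}) = \mathbf{0}\}$ denotes the rank $k$ null space. In the factorization, the left factor is $m \times 2$ with columns $(\mathbf{u}; 0)$ and $(0; -\mathbf{u})$, and the right factor is $2 \times n$ with rows $(0, \mathbf{v}^{T})$ and $(\mathbf{v}^{T}, 0)$.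 *)

(* Defs.v *)
From HB Require Import structures.
From mathcomp Require Import all_boot all_order all_algebra.
From mathcomp Require Import reals.
Set Implicit Arguments. Unset Strict Implicit. Unset Printing Implicit Defensive.
Import Order.TTheory GRing.Theory Num.Theory.
Local Open Scope ring_scope.

(* Lifted linear convolution map S : R^{m x n} -> R^{m+n-1}.
   With 0-based indices, (S_k)_{ij} = 1 iff i + j = k
   (1-based: i + j = k + 1). *)
Definition Smat {R : realType} (m n : nat) (k : nat) : 'M[R]_(m, n) :=
  \matrix_(i < m, j < n) ((nat_of_ord i + nat_of_ord j == k)%N)%:R.

Definition frob {R : realType} (m n : nat) (W S : 'M[R]_(m, n)) : R :=
  \sum_(i < m) \sum_(j < n) W i j * S i j.

Definition lifted_conv {R : realType} (m n : nat) (W : 'M[R]_(m, n))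
  : 'rV[R]_(m + n - 1) :=
  \row_(k < m + n - 1) frob W (Smat m n k).

Definition rank_null_space {R : realType} (m n p : nat)
  (S : 'M[R]_(m, n) -> 'rV[R]_p) (k : nat) : 'M[R]_(m, n) -> Prop :=
  fun X => (\rank X <= k)%N /\ S X = 0.

Definition left_factor {R : realType} (m' : nat) (u : 'cV[R]_m')
  : 'M[R]_(m'.+1, 1 + 1) :=
  row_mx (castmx (addn1 m', erefl 1%N) (col_mx u (0 : 'M[R]_(1, 1))))
         (col_mx (0 : 'M[R]_(1, 1)) (- u)).

Definition right_factor {R : realType} (n' : nat) (v : 'cV[R]_n')
  : 'M[R]_(1 + 1, n'.+1) :=
  col_mx (row_mx (0 : 'M[R]_(1, 1)) v^T)
         (castmx (erefl 1%N, addn1 n') (row_mx v^T (0 : 'M[R]_(1, 1)))).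

(* Main.v *)
Require Import Defs.
From HB Require Import structures.
From mathcomp Require Import all_boot all_order all_algebra.
From mathcomp Require Import reals.
Import Order.TTheory GRing.Theory Num.Theory.
Local Open Scope ring_scope.

Section S.
Variables (R : realType) (m' n' : nat) (u : 'cV[R]_m') (v : 'cV[R]_n').
Definition fU (i : nat) : R := if insub i is Some k then u k 0 else 0.
Definition fV (i : nat) : R := if insub i is Some k then v k 0 else 0.
Definition sh (f : nat -> R) (i : nat) : R := if i is i'.+1 then f i' else 0.

Lemma fU_ord (i : 'I_m') : fU i = u i 0.
Proof. by rewrite /fU valK. Qed.
Lemma fV_ord (i : 'I_n') : fV i = v i 0.
Proof. by rewrite /fV valK. Qed.
Lemma fU_out : fU m' = 0.
Proof. by rewrite /fU insubN // ltnn. Qed.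
Lemma fV_out : fV n' = 0.
Proof. by rewrite /fV insubN // ltnn. Qed.

Lemma L1 (i : 'I_m'.+1) (z : 'I_1) : castmx (addn1 m', erefl) (col_mx u (0:'M[R]_1)) i z = fU i.
Proof.
rewrite castmxE /=; case: (splitP (cast_ord (esym (addn1 m')) i)) => [k hk|k hk].
  rewrite (_ : cast_ord _ i = lshift 1 k); last by apply: val_inj.
  have hi : nat_of_ord i = k by rewrite -hk.
  by rewrite col_mxEu hi fU_ord cast_ord_id (ord1 z).
rewrite (_ : cast_ord _ i = rshift m' k); last by apply: val_inj.
rewrite col_mxEd mxE.
have -> : nat_of_ord i = m' by rewrite -[nat_of_ord i]/(nat_of_ord (cast_ord (esym (addn1 m')) i)) hk /= (ord1 k) addn0.
by rewrite fU_out.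
Qed.
Lemma L2 (i : 'I_m'.+1) (z : 'I_1) : col_mx (0:'M[R]_1) (- u) i z = - sh fU i.
Proof.
case: (@splitP 1 m' i) => [k hk|k hk].
  rewrite (_ : i = lshift m' k); last by apply: val_inj.
  by rewrite col_mxEu mxE /= (ord1 k) oppr0.
rewrite (_ : i = rshift 1 k); last by apply: val_inj.
by rewrite col_mxEd mxE /= fU_ord (ord1 z).
Qed.
Lemma L3 (j : 'I_n'.+1) (z : 'I_1) : castmx (erefl, addn1 n') (row_mx v^T (0:'M[R]_1)) z j = fV j.
Proof.
rewrite castmxE /=; case: (splitP (cast_ord (esym (addn1 n')) j)) => [k hk|k hk].
  rewrite (_ : cast_ord _ j = lshift 1 k); last by apply: val_inj.
  have hi : nat_of_ord j = k by rewrite -hk.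
  by rewrite row_mxEl mxE hi fV_ord cast_ord_id (ord1 z).
rewrite (_ : cast_ord _ j = rshift n' k); last by apply: val_inj.
rewrite row_mxEr mxE.
have -> : nat_of_ord j = n' by rewrite -[nat_of_ord j]/(nat_of_ord (cast_ord (esym (addn1 n')) j)) hk /= (ord1 k) addn0.
by rewrite fV_out.
Qed.
Lemma L4 (j : 'I_n'.+1) (z : 'I_1) : row_mx (0:'M[R]_1) v^T z j = sh fV j.
Proof.
case: (@splitP 1 n' j) => [k hk|k hk].
  rewrite (_ : j = lshift n' k); last by apply: val_inj.
  by rewrite row_mxEl mxE /= (ord1 k).
rewrite (_ : j = rshift 1 k); last by apply: val_inj.
by rewrite row_mxEr !mxE /= fV_ord (ord1 z).
Qed.

Lemma entry (i : 'I_m'.+1) (j : 'I_n'.+1) :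
  (left_factor u *m right_factor v) i j = fU i * sh fV j - sh fU i * fV j.
Proof.
rewrite !mxE big_ord_recr big_ord1 /=.
rewrite /left_factor /right_factor.
have -> : (widen_ord (m:=2) (leqnSn 1) ord0) = lshift 1 (ord0 : 'I_1) by apply: val_inj.
have -> : (ord_max : 'I_(1+1)) = rshift 1 (ord0 : 'I_1) by apply: val_inj.
rewrite row_mxEl row_mxEr col_mxEu col_mxEd L1 L2 L3 L4.
by rewrite mulNr.
Qed.

Lemma conv0 (k : nat) :
  \sum_(i < m'.+1) \sum_(j < n'.+1) (fU i * sh fV j - sh fU i * fV j) * ((i + j == k)%N)%:R = 0 :> R.
Proof.
under eq_bigr => i _ do under eq_bigr => j _ do rewrite mulrBl.
under eq_bigr => i _ do rewrite sumrB.
rewrite sumrB; apply/eqP; rewrite subr_eq0; apply/eqP.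
rewrite big_ord_recr /= fU_out.
under [X in _ + X = _]eq_bigr => j _ do rewrite !mul0r.
rewrite big1_eq addr0.
rewrite [RHS]big_ord_recl /=.
under [X in _ = X + _]eq_bigr => j _ do rewrite mul0r mul0r.
rewrite big1_eq add0r.
apply: eq_bigr => i _.
rewrite big_ord_recl /= mulr0 mul0r add0r.
rewrite big_ord_recr /= fV_out mulr0 mul0r addr0.
apply: eq_bigr => j _.
by rewrite /bump /= !add1n addnS addSn.
Qed.
End S.

Theorem proposition2 (R : realType) (m' n' : nat)
  (X : 'M[R]_(m'.+1, n'.+1)) (u : 'cV[R]_m') (v : 'cV[R]_n') :
  X = left_factor u *m right_factor v ->
  rank_null_space (@lifted_conv R m'.+1 n'.+1) 2 X.
Proof.
move=> ->; split.
  exact: leq_trans (mxrankM_maxl _ _) (rank_leq_col _).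
apply/rowP => k; rewrite !mxE /frob.
under eq_bigr => i _ do under eq_bigr => j _ do rewrite entry mxE.
exact: conv0.
Qed.
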